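(* Let $P$ be a Poisson tensor on $\mathbb{R}^3$, let $H\in C^\infty(\mathbb{R}^3)$, let $S\in C^\infty(\mathbb{R}^3)$ satisfy $PdS=0$, and let $g$ be the symmetric tensor with components $g^{ij}=H^iH^j-\delta^{ij}\sum_k H^kH^k$. Consider the system $\dot{x}=PdH+gdS$, along which the time derivative of $S$ at a point $x$ is $dS/dt=d_xS\cdot(P\,d_xH+g\,d_xS)$. If $x$ is a regular point of $P$ (i.e. $P(x)\neq0$) with $d_xS\neq 0$, then $dS/dt=0$ at $x$ if and only if $x$ is an equilibrium of this system.
   Context: $\mathbb{R}^3$ carries the standard Euclidean metric, used to identify tangent and cotangent spaces with $\mathbb{R}^3$ and to pair covectors with vectors (denoted by a dot); $H^i=H_i=\partial H/\partial x^i$. A Poisson tensor is a skew-symmetric bivector field satisfying the Jacobi identity. *)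

(* Defs.v *)
From HB Require Import structures.
From mathcomp Require Import all_boot all_order all_algebra.
From mathcomp Require Import all_classical all_reals all_analysis.
Set Implicit Arguments. Unset Strict Implicit. Unset Printing Implicit Defensive.
Import Order.TTheory GRing.Theory Num.Theory.
Import numFieldNormedType.Exports.
Local Open Scope ring_scope.

Section Defs.
Variable R : realType.
Notation V := 'rV[R]_3.

Definition evec (i : 'I_3) : V := delta_mx 0 i.

Definition partial (f : V -> R) (i : 'I_3) : V -> R :=
  fun x => derive f x (evec i).

Fixpoint Ck (k : nat) (f : V -> R) : Prop :=
  match k with
  | 0 => continuous f
  | k'.+1 => continuous f /\
      forall i : 'I_3, (forall x, derivable f x (evec i)) /\ Ck k' (partial f i)
  end.

Definition smooth (f : V -> R) : Prop := forall k, Ck k f.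

Definition grad (f : V -> R) (x : V) : V := \row_i partial f i x.

Definition poisson_tensor (P : V -> 'M[R]_3) : Prop :=
  (forall i j : 'I_3, smooth (fun x => P x i j)) /\
  (forall x (i j : 'I_3), P x i j = - P x j i) /\
  (forall x (i j k : 'I_3),
     \sum_(l < 3) (P x i l * partial (fun y => P y j k) l x
                 + P x j l * partial (fun y => P y k i) l x
                 + P x k l * partial (fun y => P y i j) l x) = 0).

Definition gten (H : V -> R) (x : V) : 'M[R]_3 :=
  \matrix_(i, j) (grad H x 0 i * grad H x 0 j
                  - (i == j)%:R * \sum_(k < 3) grad H x 0 k * grad H x 0 k).

Definition vfield (P : V -> 'M[R]_3) (H S : V -> R) (x : V) : V :=
  \row_i (\sum_(j < 3) P x i j * grad H x 0 j
          + \sum_(j < 3) gten H x i j * grad S x 0 j).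

Definition dSdt (P : V -> 'M[R]_3) (H S : V -> R) (x : V) : R :=
  \sum_(i < 3) grad S x 0 i * vfield P H S x 0 i.

End Defs.

(* Main.v *)
Require Import Defs.
From HB Require Import structures.
From mathcomp Require Import all_boot all_order all_algebra.
From mathcomp Require Import all_classical all_reals all_analysis.
From mathcomp Require Import ring lra.
Import Order.TTheory GRing.Theory Num.Theory.
Local Open Scope ring_scope.

Lemma sum3 (R : realType) (f : 'I_3 -> R) : \sum_(i < 3) f i = f 0 + f 1 + f 2.
Proof. rewrite !big_ord_recl big_ord0 addr0 addrA; congr (_ + f _ + f _); exact/val_inj. Qed.

Lemma par (R : realType) (s0 s1 s2 u0 u1 u2 : R) :
  (s0 != 0) || (s1 != 0) || (s2 != 0) ->
  u1 * s2 - u2 * s1 = 0 -> u2 * s0 - u0 * s2 = 0 -> u0 * s1 - u1 * s0 = 0 ->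
  exists l, [/\ u0 = l * s0, u1 = l * s1 & u2 = l * s2].
Proof.
move=> /orP[/orP[]|] hs e1 e2 e3.
- exists (u0 / s0); split; first by rewrite divfK.
  + by apply: (mulIf hs); rewrite mulrAC divfK //; nra.
  + by apply: (mulIf hs); rewrite mulrAC divfK //; nra.
- exists (u1 / s1); split; last 2 first; first by rewrite divfK.
  + by apply: (mulIf hs); rewrite mulrAC divfK //; nra.
  + by apply: (mulIf hs); rewrite mulrAC divfK //; nra.
- exists (u2 / s2); split; last first; first by rewrite divfK.
  + by apply: (mulIf hs); rewrite mulrAC divfK //; nra.
  + by apply: (mulIf hs); rewrite mulrAC divfK //; nra.
Qed.

Lemma alg (R : realType) (s0 s1 s2 h0 h1 h2 a b c : R) :
  (s0 != 0) || (s1 != 0) || (s2 != 0) ->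
  a * s1 + b * s2 = 0 -> - a * s0 + c * s2 = 0 -> - b * s0 - c * s1 = 0 ->
  let n := h0 * h0 + h1 * h1 + h2 * h2 in
  let d := h0 * s0 + h1 * s1 + h2 * s2 in
  let v0 := a * h1 + b * h2 + (h0 * d - n * s0) in
  let v1 := - a * h0 + c * h2 + (h1 * d - n * s1) in
  let v2 := - b * h0 - c * h1 + (h2 * d - n * s2) in
  s0 * v0 + s1 * v1 + s2 * v2 = 0 -> [/\ v0 = 0, v1 = 0 & v2 = 0].
Proof.
move=> hs e1 e2 e3 n d v0 v1 v2 hv.
have hsq : (h1 * s2 - h2 * s1) ^+ 2 + (h2 * s0 - h0 * s2) ^+ 2 + (h0 * s1 - h1 * s0) ^+ 2 = 0.
  have Z : h0*(a*s1+b*s2) + h1*(-a*s0+c*s2) + h2*(-b*s0-c*s1) = 0 by rewrite e1 e2 e3; ring.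
  transitivity (-(s0 * v0 + s1 * v1 + s2 * v2) - (h0*(a*s1+b*s2) + h1*(-a*s0+c*s2) + h2*(-b*s0-c*s1))).
    rewrite /v0 /v1 /v2 /n /d; ring.
  by rewrite hv Z; ring.
have q1 := sqr_ge0 (h1 * s2 - h2 * s1).
have q2 := sqr_ge0 (h2 * s0 - h0 * s2).
have q3 := sqr_ge0 (h0 * s1 - h1 * s0).
have c1 : h1 * s2 - h2 * s1 = 0 by apply/eqP; rewrite -sqrf_eq0; apply/eqP; lra.
have c2 : h2 * s0 - h0 * s2 = 0 by apply/eqP; rewrite -sqrf_eq0; apply/eqP; lra.
have c3 : h0 * s1 - h1 * s0 = 0 by apply/eqP; rewrite -sqrf_eq0; apply/eqP; lra.
have [l [E0 E1 E2]] := @par R _ _ _ _ _ _ hs c1 c2 c3.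
have [m []] := @par R s0 s1 s2 (-c) b (-a) hs ltac:(lra) ltac:(lra) ltac:(lra).
move=> Ec Eb Ea.
have {}Ec : c = - (m * s0) by lra.
have {}Ea : a = - (m * s2) by lra.
rewrite /v0 /v1 /v2 /n /d; subst; split; ring.
Qed.

Theorem mainTheorem8 (R : realType) (P : 'rV[R]_3 -> 'M[R]_3) (H S : 'rV[R]_3 -> R) :
  poisson_tensor P -> smooth H -> smooth S ->
  (forall (x : 'rV[R]_3) (i : 'I_3), \sum_(j < 3) P x i j * grad S x 0 j = 0) ->
  forall x : 'rV[R]_3, P x != 0 -> grad S x != 0 ->
  (dSdt P H S x = 0 <-> vfield P H S x = 0).
Proof.
move=> [_ [skew _]] _ _ PS x _ hS.
have hs : (grad S x 0 0 != 0) || (grad S x 0 1 != 0) || (grad S x 0 2 != 0).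
  move: hS; apply: contraNT; rewrite !negb_or !negbK => /andP[/andP[/eqP e0 /eqP e1] /eqP e2].
  apply/eqP/rowP => i; rewrite [RHS]mxE; case: i => -[|[|[|//]]] Hi.
  - by rewrite -e0; congr (_ _ _); apply/val_inj.
  - by rewrite -e1; congr (_ _ _); apply/val_inj.
  - by rewrite -e2; congr (_ _ _); apply/val_inj.
have V : forall i, vfield P H S x 0 i = \sum_(j < 3) P x i j * grad H x 0 j
  + \sum_(j < 3) (grad H x 0 i * grad H x 0 j - (i == j)%:R * \sum_(k < 3) grad H x 0 k * grad H x 0 k) * grad S x 0 j.
  by move=> i; rewrite mxE; congr (_ + _); apply: eq_bigr => j _; rewrite mxE.
have P00 : P x 0 0 = 0 by have := skew x 0 0; lra.
have P11 : P x 1 1 = 0 by have := skew x 1 1; lra.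
have P22 : P x 2 2 = 0 by have := skew x 2 2; lra.
have P10 := skew x 1 0. have P20 := skew x 2 0. have P21 := skew x 2 1.
have e1 := PS x 0. have e2 := PS x 1. have e3 := PS x 2.
rewrite !sum3 P00 P11 P22 P10 P20 P21 in e1 e2 e3.
split; last first.
  by move=> hv; rewrite /dSdt big1 // => i _; rewrite hv !mxE mulr0.
rewrite /dSdt sum3 !V !sum3 P00 P11 P22 P10 P20 P21 /= => hv.
have f1 : P x 0 1 * grad S x 0 1 + P x 0 2 * grad S x 0 2 = 0 by rewrite -[RHS]e1; ring.
have f2 : - P x 0 1 * grad S x 0 0 + P x 1 2 * grad S x 0 2 = 0 by rewrite -[RHS]e2; ring.
have f3 : - P x 0 2 * grad S x 0 0 - P x 1 2 * grad S x 0 1 = 0 by rewrite -[RHS]e3; ring.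
have [E0 E1 E2] := @alg R _ _ _ (grad H x 0 0) (grad H x 0 1) (grad H x 0 2) _ _ _ hs f1 f2 f3
  ltac:(by rewrite -[RHS]hv; ring).
apply/rowP => i; rewrite V [RHS]mxE; case: i => -[|[|[|//]]] Hi.
- rewrite (_ : Ordinal Hi = 0); last exact/val_inj.
  rewrite !sum3 ?P00 ?P11 ?P22 ?P10 ?P20 ?P21 /=; rewrite -[RHS]E0; ring.
- rewrite (_ : Ordinal Hi = 1); last exact/val_inj.
  rewrite !sum3 ?P00 ?P11 ?P22 ?P10 ?P20 ?P21 /=; rewrite -[RHS]E1; ring.
- rewrite (_ : Ordinal Hi = 2); last exact/val_inj.
  rewrite !sum3 ?P00 ?P11 ?P22 ?P10 ?P20 ?P21 /=; rewrite -[RHS]E2; ring.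
Qed.
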